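(* Let $S$ be an intra-regular $\Gamma$-AG$^{**}$-groupoid and let $I_s$ be the set of all two-sided $\Gamma$-ideals of $S$. Then for $A,B\in I_s$ we have $A\Gamma B\in I_s$, and $(I_s,\ (A,B)\mapsto A\Gamma B)$ is a semilattice: the operation is commutative, associative and idempotent ($A\Gamma B=B\Gamma A$, $(A\Gamma B)\Gamma C=A\Gamma(B\Gamma C)$, $A\Gamma A=A$).
   Context: Let $S$ and $\Gamma$ be nonempty sets with a map $S\times\Gamma\times S\to S$, $(x,\gamma,y)\mapsto x\gamma y$. $S$ is a $\Gamma$-AG-groupoid if $(x\gamma y)\delta z=(z\gamma y)\delta x$ for all $x,y,z\in S$, $\gamma,\delta\in\Gamma$; it is a $\Gamma$-AG$^{**}$-groupoid if moreover $a\alpha(b\beta c)=b\alpha(a\beta c)$ for all $a,b,c\in S$, $\alpha,\beta\in\Gamma$. For subsets $A,B\subseteq S$, $A\Gamma B=\{a\gamma b: a\in A,\gamma\in\Gamma,b\in B\}$. $S$ is intra-regular if for every $a\in S$ there exist $x,y\in S$ and $\beta,\gamma,\delta\in\Gamma$ with $a=(x\beta(a\delta a))\gamma y$. A nonempty subset $A$ is a two-sided $\Gamma$-ideal if $S\Gamma A\subseteq A$ and $A\Gamma S\subseteq A$. *)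

(* Defs.v *)
Set Implicit Arguments.

Section GammaDefs.
Variables (S G : Type) (op : S -> G -> S -> S).

Definition is_GammaAG : Prop :=
  forall (x y z : S) (g d : G), op (op x g y) d z = op (op z g y) d x.

Definition is_GammaAGss : Prop :=
  is_GammaAG /\
  forall (a b c : S) (al be : G), op a al (op b be c) = op b al (op a be c).

Definition intra_regular : Prop :=
  forall a : S, exists (x y : S) (be ga de : G),
    a = op (op x be (op a de a)) ga y.

Definition GProd (A B : S -> Prop) : S -> Prop :=
  fun s => exists a g b, A a /\ B b /\ s = op a g b.

Definition set_incl (A B : S -> Prop) : Prop := forall x, A x -> B x.
Definition set_eq (A B : S -> Prop) : Prop := forall x, A x <-> B x.

Definition full : S -> Prop := fun _ => True.

Definition two_sided_ideal (A : S -> Prop) : Prop :=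
  (exists a, A a) /\
  set_incl (GProd full A) A /\ set_incl (GProd A full) A.
End GammaDefs.

(* Main.v *)
Require Import Defs.
From Stdlib Require Import Setoid.

Section H.
Variables (S G : Type) (op : S -> G -> S -> S).
Hypothesis HAG : is_GammaAGss op.
Hypothesis Hir : intra_regular op.

Lemma key (A : S -> Prop) : two_sided_ideal op A ->
  forall a, A a -> exists p g, A p /\ a = op p g a.
Proof.
  intros [_ [HL HR]] a Ha.
  destruct HAG as [Hl Hs].
  destruct (Hir a) as [x [y [be [ga [de E]]]]].
  exists (op y be (op x de a)), ga. split.
  - apply HL. exists y, be, (op x de a). split; [exact I|]. split; [|reflexivity].
    apply HL. exists x, de, a. repeat split; auto.
  - rewrite (Hs x a a be de), (Hl a (op x de a) y be ga) in E. exact E.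
Qed.

Lemma prod_iff A B : two_sided_ideal op A -> two_sided_ideal op B ->
  forall x, GProd op A B x <-> A x /\ B x.
Proof.
  intros HA HB x. split.
  - intros [a [g [b [Ha [Hb E]]]]]. split.
    + apply (proj2 (proj2 HA)). exists a, g, b. repeat split; auto.
    + apply (proj1 (proj2 HB)). exists a, g, b. repeat split; auto.
  - intros [Ha Hb]. destruct (@key A HA x Ha) as [p [g [Hp E]]].
    exists p, g, x. auto.
Qed.
End H.

Theorem mainTheorem19 (S G : Type) (op : S -> G -> S -> S)
  (s0 : S) (g0 : G)
  (HAG : is_GammaAGss op) (Hir : intra_regular op) :
  (forall A B, two_sided_ideal op A -> two_sided_ideal op B ->
     two_sided_ideal op (GProd op A B)) /\
  (forall A B, two_sided_ideal op A -> two_sided_ideal op B ->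
     set_eq (GProd op A B) (GProd op B A)) /\
  (forall A B C, two_sided_ideal op A -> two_sided_ideal op B ->
     two_sided_ideal op C ->
     set_eq (GProd op (GProd op A B) C) (GProd op A (GProd op B C))) /\
  (forall A, two_sided_ideal op A -> set_eq (GProd op A A) A).
Proof.
  assert (PI : forall A B, two_sided_ideal op A -> two_sided_ideal op B ->
     two_sided_ideal op (GProd op A B)).
  { intros A B HA HB. split; [|split].
    - destruct HA as [[a Ha] _]. destruct HB as [[b Hb] _].
      exists (op a g0 b). exists a, g0, b. auto.
    - intros x [u [g [v [_ [Hv E]]]]]. subst x.
      apply (@prod_iff _ _ op HAG Hir _ _ HA HB) in Hv. destruct Hv as [Hva Hvb].
      apply (@prod_iff _ _ op HAG Hir _ _ HA HB). split.
      + apply (proj1 (proj2 HA)). exists u, g, v. repeat split; auto.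
      + apply (proj1 (proj2 HB)). exists u, g, v. repeat split; auto.
    - intros x [u [g [v [Hu [_ E]]]]]. subst x.
      apply (@prod_iff _ _ op HAG Hir _ _ HA HB) in Hu. destruct Hu as [Hua Hub].
      apply (@prod_iff _ _ op HAG Hir _ _ HA HB). split.
      + apply (proj2 (proj2 HA)). exists u, g, v. repeat split; auto.
      + apply (proj2 (proj2 HB)). exists u, g, v. repeat split; auto. }
  split; [exact PI|]. split; [|split].
  - intros A B HA HB x. rewrite (@prod_iff _ _ op HAG Hir _ _ HA HB), (@prod_iff _ _ op HAG Hir _ _ HB HA). tauto.
  - intros A B C HA HB HC x.
    rewrite (@prod_iff _ _ op HAG Hir _ _ (PI _ _ HA HB) HC), (@prod_iff _ _ op HAG Hir _ _ HA (PI _ _ HB HC)),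
      (@prod_iff _ _ op HAG Hir _ _ HA HB), (@prod_iff _ _ op HAG Hir _ _ HB HC). tauto.
  - intros A HA x. rewrite (@prod_iff _ _ op HAG Hir _ _ HA HA). tauto.
Qed.
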